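(* For all $n\ge1$, $|\mathbf{I}_n(000)|=\dfrac{(n+1)!-d_{n+1}}{n}$, where $d_m$ is the number of derangements (fixed-point-free permutations) of $[m]$.
   Context: An inversion sequence of length $n$ is an integer sequence $e=e_1\dots e_n$ with $0\le e_i<i$ for all $i$; $\mathbf{I}_n$ denotes the set of these. $\mathbf{I}_n(000)$ is the set of $e\in\mathbf{I}_n$ with no $i$ such that $e_i=e_{i+1}=e_{i+2}$ (i.e. avoiding the consecutive pattern $000$). *)

(* Defs.v *)
From mathcomp Require Import all_boot all_order all_algebra all_fingroup.
Set Implicit Arguments. Unset Strict Implicit. Unset Printing Implicit Defensive.

(* An inversion sequence of length n, e = e_1 ... e_n with 0 <= e_i < i,
   is represented as an n-tuple over 'I_n, where the entry at 0-based
   position j (i.e. e_{j+1}) satisfies e_{j+1} <= j. *)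
Definition is_inv_seq n (e : n.-tuple 'I_n) : bool :=
  [forall j : 'I_n, (val (tnth e j) <= val j)%N].

Definition avoids000 n (e : n.-tuple 'I_n) : bool :=
  ~~ [exists j : 'I_n, [&& (j.+2 < n)%N,
        nth 0%N (map val e) j == nth 0%N (map val e) j.+1 &
        nth 0%N (map val e) j.+1 == nth 0%N (map val e) j.+2]].

Definition I000 n : {set n.-tuple 'I_n} :=
  [set e | is_inv_seq e && avoids000 e].

Definition derangements m : nat := #|[set s : 'S_m | [forall i, s i != i]]|.

(* Main.v *)
Require Import Defs.
From mathcomp Require Import all_boot all_order all_algebra all_fingroup.
From mathcomp Require Import ring lra.
Set Implicit Arguments. Unset Strict Implicit. Unset Printing Implicit Defensive.
Import GRing.Theory Num.Theory.

Fixpoint avr (r : seq nat) : bool :=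
  match r with
  | x :: ((y :: z :: _) as t) => ~~ ((x == y) && (y == z)) && avr t
  | _ => true
  end.
Definition av (s : seq nat) := avr (rev s).
Definition endeq (s : seq nat) :=
  match rev s with y :: z :: _ => y == z | _ => false end.

Fixpoint L n : seq (seq nat) :=
  if n is m.+1 then [seq rcons s x | s <- L m, x <- iota 0 m.+1] else [:: [::]].

Definition bad (s : seq nat) j :=
  [&& j.+2 < size s, nth 0 s j == nth 0 s j.+1 & nth 0 s j.+1 == nth 0 s j.+2].

Lemma memL n s : (s \in L n) <-> (size s = n /\ forall j, j < n -> nth 0 s j <= j).
Proof.
elim: n s => [|n IH] s.
  rewrite /= inE; split; first by move/eqP->.
  by case=> /size0nil ->.
have -> : L n.+1 = [seq rcons s x | s <- L n, x <- iota 0 n.+1] by []; split.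
  case/allpairsP=> [[t x] [/IH [st ht] xi ->]].
  rewrite size_rcons st; split=> // j jn.
  rewrite nth_rcons st; case: ltnP => jn'; first exact: ht.
  move: xi; rewrite mem_iota /= => xi.
  by case: (eqVneq j n) => [->|//]; rewrite -ltnS.
case: (lastP s) => [|t x]; first by case.
rewrite size_rcons => [[[st] ht]].
apply/allpairsP; exists (t, x); split=> //.
  apply/IH; split=> // j jn.
  have := ht j (ltnW jn).
  by rewrite nth_rcons st jn.
have := ht n (leqnn _); rewrite nth_rcons st ltnn eqxx => h.
by rewrite mem_iota add0n ltnS.
Qed.

Lemma uniqL n : uniq (L n).
Proof.
elim: n => [|n IH] //.
have -> : L n.+1 = [seq rcons s x | s <- L n, x <- iota 0 n.+1] by [].
apply: allpairs_uniq => //; first exact: iota_uniq.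
by move=> [a b] [c d] _ _ /= /rcons_inj.
Qed.

Lemma bad_rcons t x j : bad (rcons t x) j =
  bad t j || [&& j.+2 == size t, nth 0 t j == nth 0 t j.+1 & nth 0 t j.+1 == x].
Proof.
rewrite /bad size_rcons !nth_rcons.
case: (ltngtP j.+2 (size t)) => h.
- have h1 : j < size t by apply: ltn_trans h; apply: ltn_trans (ltnSn _) _.
  have h2 : j.+1 < size t by apply: ltn_trans h.
  by rewrite h1 (ltn_trans h (ltnSn _)) orbF.
- by rewrite ltnS leqNgt h.
- have h1 : j < size t by rewrite -h; apply: ltn_trans (ltnSn _) _.
  by rewrite h1 -h ltnSn.
Qed.

Lemma av_spec s : av s <-> forall j, ~~ bad s j.
Proof.
elim/last_ind: s => [|t x IH].
  by split=> // _ j; rewrite /bad /= andbF.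
case: (lastP t) IH => [|t1 y]; clear t.
  by move=> _; split=> // _ j; rewrite /bad /=; case: j.
case: (lastP t1) => [|u z] IH.
  split=> // _ j; rewrite /bad /=; case: j => //; case=> //.
have ev : av (rcons (rcons (rcons u z) y) x) =
   ~~ ((x == y) && (y == z)) && av (rcons (rcons u z) y).
  by rewrite /av !rev_rcons.
rewrite ev; set t := rcons (rcons u z) y.
have st : size t = (size u).+2 by rewrite /t !size_rcons.
have nz : nth 0 t (size u) = z by rewrite /t -!cats1 -catA nth_cat ltnn subnn.
have ny : nth 0 t (size u).+1 = y.
  by rewrite /t -!cats1 -catA nth_cat ltnNge leqnSn /= subSnn.
split.
  case/andP=> h /IH h' j; rewrite bad_rcons negb_or h' /=.
  apply/negP; case/and3P=> /eqP; rewrite st; case=> ->.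
  by rewrite nz ny => /eqP zy /eqP yx; move: h; rewrite zy yx !eqxx.
move=> H; apply/andP; split.
  have := H (size u); rewrite bad_rcons st eqxx nz ny negb_or /= => /andP [_].
  by rewrite [z == y]eq_sym [y == x]eq_sym andbC.
apply/IH => j; have := H j; rewrite bad_rcons negb_or; by case/andP.
Qed.

Lemma nth_mapval n (e : n.-tuple 'I_n) (j : 'I_n) :
  nth 0 (map val e) j = val (tnth e j).
Proof. by rewrite (nth_map (tnth e j)) ?size_tuple // -tnth_nth. Qed.

Lemma inv_L n (e : n.-tuple 'I_n) : is_inv_seq e = (map val e \in L n).
Proof.
apply/idP/idP.
  move/forallP=> H; apply/memL; split; first by rewrite size_map size_tuple.
  by move=> j jn; have := H (Ordinal jn); rewrite -nth_mapval.
move/memL=> [_ H]; apply/forallP=> j.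
by rewrite -nth_mapval; apply: H.
Qed.

Lemma avoids_av n (e : n.-tuple 'I_n) : avoids000 e = av (map val e).
Proof.
apply/idP/idP.
  move=> H; apply/av_spec=> j; apply/negP=> B; move/negP: H; apply.
  have jn : j < n.
    by move: B; rewrite /bad size_map size_tuple => /andP [h _]; apply: ltn_trans h.
  by apply/existsP; exists (Ordinal jn); move: B; rewrite /bad size_map size_tuple.
move/av_spec=> H; apply/negP; case/existsP=> j B.
by have := H j; rewrite /bad size_map size_tuple B.
Qed.

Lemma card_I000 n : #|I000 n| = count av (L n).
Proof.
rewrite cardE -size_filter -(size_map (fun e : n.-tuple 'I_n => map val e)).
apply: perm_size; apply: uniq_perm.
- rewrite map_inj_uniq ?enum_uniq //.
  by move=> a b /(inj_map val_inj) /val_inj.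
- by rewrite filter_uniq // uniqL.
move=> s; apply/mapP/idP.
  case=> e; rewrite mem_enum inE => /andP [i a] ->.
  by rewrite mem_filter -avoids_av a -inv_L i.
rewrite mem_filter => /andP [a /memL [sz H]].
have H' : forall i : 'I_n, nth 0 s i < n.
  by move=> i; apply: leq_ltn_trans (H i (ltn_ord i)) (ltn_ord i).
have es : map val [tuple Ordinal (H' i) | i < n] = s.
  rewrite /= -map_comp /comp /=.
  have -> : [seq nth 0 s (val x) | x <- enum 'I_n] = map (nth 0 s) (map val (enum 'I_n)).
    by rewrite -map_comp.
  rewrite val_enum_ord.
  by rewrite -sz; apply: mkseq_nth.
exists [tuple Ordinal (H' i) | i < n]; last by rewrite es.
by rewrite mem_enum inE inv_L avoids_av es a andbT; apply/memL.
Qed.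

Lemma count_sum (T : Type) (P : pred T) (l : seq T) : count P l = \sum_(x <- l) (P x : nat).
Proof. by elim: l => [|a l IH]; rewrite ?big_nil ?big_cons //= IH. Qed.

Lemma count_Ls P n : count P (L n.+1) =
  \sum_(s <- L n) count (fun x => P (rcons s x)) (iota 0 n.+1).
Proof.
have -> : L n.+1 = flatten [seq [seq rcons s x | x <- iota 0 n.+1] | s <- L n] by [].
rewrite count_flatten sumnE big_map big_map; apply: eq_bigr => s _.
by rewrite count_map.
Qed.

Lemma cnt_eq y n : y < n.+1 -> count (fun x => x == y) (iota 0 n.+1) = 1.
Proof.
move=> yn; transitivity (count_mem y (iota 0 n.+1)); first by [].
by rewrite count_uniq_mem ?iota_uniq // mem_iota add0n yn.
Qed.

Lemma cnt_ne y n : y < n.+1 -> count (fun x => x != y) (iota 0 n.+1) = n.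
Proof.
move=> yn; have := count_predC (fun x => x == y) (iota 0 n.+1).
by rewrite cnt_eq // size_iota add1n => [[]].
Qed.

Lemma last_lt n s y r : s \in L n -> rev s = y :: r -> y < n.
Proof.
move/memL=> [sz H] E.
have es : s = rcons (rev r) y by rewrite -rev_cons -E revK.
have := H (size (rev r)); rewrite es nth_rcons ltnn eqxx => h.
have e2 : size s = (size (rev r)).+1 by rewrite es size_rcons.
by apply: leq_ltn_trans (h _) _; rewrite -sz e2.
Qed.

Lemma av_rcons s x : av (rcons s x) =
  match rev s with y :: z :: _ => ~~ ((x == y) && (y == z)) && av s | _ => true end.
Proof. by rewrite /av rev_rcons; case: (rev s) => [|y [|z r]]. Qed.

Lemma endeq_rcons s x : endeq (rcons s x) =
  match rev s with y :: _ => x == y | _ => false end.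
Proof. by rewrite /endeq rev_rcons; case: (rev s) => [|y [|z r]]. Qed.

Lemma innerA n s : 0 < n -> s \in L n ->
  count (fun x => av (rcons s x)) (iota 0 n.+1) = n * av s + (av s && ~~ endeq s).
Proof.
move=> n0 sL.
under eq_count do rewrite av_rcons.
rewrite /endeq; case E: (rev s) => [|y [|z r]].
- move: sL => /memL [sz _]; move: E => /(f_equal size); rewrite size_rev sz /=.
  by move=> h; move: n0; rewrite h.
- by rewrite /av E /= count_predT size_iota muln1 addn1.
- 
  have yn : y < n.+1 := ltnW (last_lt sL E).
  case: (av s); last by rewrite (@eq_count _ _ pred0) ?count_pred0 /= ?muln0 // => x; rewrite andbF.
  rewrite muln1; case: (eqVneq y z) => [_|yz].
    rewrite [RHS]/= addn0 -[in RHS](cnt_ne yn); apply: eq_count => x; by rewrite !andbT.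
  rewrite [RHS]/= addn1 (@eq_count _ _ predT) ?count_predT ?size_iota // => x.
  by rewrite andbF.
Qed.

Lemma innerC n s : 0 < n -> s \in L n ->
  count (fun x => av (rcons s x) && ~~ endeq (rcons s x)) (iota 0 n.+1) = n * av s.
Proof.
move=> n0 sL.
under eq_count do rewrite av_rcons endeq_rcons.
case E: (rev s) => [|y [|z r]].
- move: sL => /memL [sz _]; move: E => /(f_equal size); rewrite size_rev sz /=.
  by move=> h; move: n0; rewrite h.
- rewrite /av E [RHS]/= muln1 -[in RHS](cnt_ne (ltnW (last_lt sL E))).
  by apply: eq_count.
- 
  have yn : y < n.+1 := ltnW (last_lt sL E).
  case: (av s); last by rewrite (@eq_count _ _ pred0) ?count_pred0 /= ?muln0 // => x; rewrite andbF.
  rewrite muln1 -[in RHS](cnt_ne yn); apply: eq_count => x.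
  by case: (x == y); rewrite ?andbF ?andbT.
Qed.

Definition A n := count av (L n).
Definition Cc n := count (fun s => av s && ~~ endeq s) (L n).

Lemma recA n : 0 < n -> A n.+1 = n * A n + Cc n.
Proof.
move=> n0; rewrite /A /Cc count_Ls (eq_big_seq _ (fun s sL => innerA n0 sL)).
by rewrite big_split /= -big_distrr /= -!count_sum.
Qed.

Lemma recC n : 0 < n -> Cc n.+1 = n * A n.
Proof.
move=> n0; rewrite /A /Cc count_Ls (eq_big_seq _ (fun s sL => innerC n0 sL)).
by rewrite -big_distrr /= -!count_sum.
Qed.

Lemma A1 : A 1 = 1. Proof. by []. Qed.
Lemma C1 : Cc 1 = 1. Proof. by []. Qed.
Local Open Scope ring_scope.

Lemma sign_sum (T : finType) (B : {set T}) :
  \sum_(A : {set T} | A \subset B) (-1) ^+ #|A| = ((B == set0)%:R : rat).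
Proof.
case: (set_0Vmem B) => [->|[b bB]].
  rewrite eqxx (eq_bigl (fun A => A == set0)) ?big_pred1_eq ?cards0 ?expr0 //.
  by move=> A; rewrite subset0.
have -> : (B == set0) = false by apply/negbTE/set0Pn; exists b.
set t := fun A : {set T} => if b \in A then A :\ b else b |: A.
have tK : involutive t.
  move=> A; rewrite /t; case: (boolP (b \in A)) => bA.
    by rewrite setD11 setD1K.
  by rewrite setU11 setU1K.
set S := \sum_(A : {set T} | A \subset B) (-1) ^+ #|A| : rat.
have : S = - S.
  rewrite {1}/S (reindex_inj (inv_inj tK)) /S -sumrN.
  apply: eq_big => A.
    rewrite /t; case: ifP => bA.
      apply/idP/idP => h; last by apply: subset_trans (subD1set _ _) h.
      by rewrite -(setD1K bA) subUset sub1set bB h.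
    by rewrite subUset sub1set bB.
  move=> _; rewrite /t; case: ifP => bA.
    by rewrite [in RHS](cardsD1 b A) bA add1n exprS mulN1r opprK.
  by rewrite cardsU1 bA add1n exprS mulN1r.
move=> h; rewrite /= mulr0n; lra.
Qed.

Definition E m : rat := \sum_(k < m.+1) (-1) ^+ k * ('C(m, k) * (m - k)`!)%:R.

Lemma der_sets m : ((derangements m)%:R : rat) =
  \sum_(A : {set 'I_m}) (-1) ^+ #|A| * ((m - #|A|)`!)%:R.
Proof.
rewrite /derangements -sum1_card natr_sum.
rewrite big_mkcond /=.
set Fix := fun s : 'S_m => [set i | s i == i].
transitivity (\sum_(s : 'S_m) \sum_(A : {set 'I_m} | A \subset Fix s) (-1) ^+ #|A| : rat).
  apply: eq_bigr => s _; rewrite sign_sum inE.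
  suff -> : [forall i, s i != i] = (Fix s == set0) by case: (Fix s == set0).
  apply/forallP/eqP.
    move=> H; apply/setP => i; rewrite !inE; exact: negbTE (H i).
  move=> H i; apply/negP => si.
  by have := in_set0 i; rewrite -H inE si.
rewrite (eq_bigr (fun s => \sum_(A : {set 'I_m}) if A \subset Fix s then (-1) ^+ #|A| else 0));
  last by move=> s _; rewrite big_mkcond.
rewrite exchange_big /=; apply: eq_bigr => A _.
rewrite -big_mkcond /= sumr_const.
have -> : #|[pred s : 'S_m | A \subset Fix s]| = (m - #|A|)`!.
  have -> : (m - #|A|)%N = #|~: A|.
    have h : (#|A| + #|~: A| = m)%N by rewrite cardsC card_ord.
    by rewrite -[X in (X - _)%N]h addKn.
  rewrite -card_perm; apply: eq_card => s.
  rewrite !inE /perm_on; apply/subsetP/subsetP.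
    move=> H i; rewrite !inE; apply: contraNN => iA.
    by have := H i iA; rewrite inE.
  by move=> H i iA; rewrite inE; apply/negPn/negP => /H; rewrite inE iA.
by rewrite mulr_natr.
Qed.

Lemma der_E m : ((derangements m)%:R : rat) = E m.
Proof.
rewrite der_sets /E.
rewrite (partition_big (fun A : {set 'I_m} => (inord #|A| : 'I_m.+1)) predT) //=.
apply: eq_bigr => k _.
have -> : \sum_(A : {set 'I_m} | true && (inord #|A| == k)) (-1) ^+ #|A| * ((m - #|A|)`!)%:R
   = \sum_(A : {set 'I_m} | #|A| == k) ((-1) ^+ k * ((m - k)`!)%:R : rat).
  apply: eq_big => A.
    have hA : (#|A| < m.+1)%N by rewrite ltnS -[X in (_ <= X)%N](card_ord m) max_card.
    by rewrite /= -(inj_eq val_inj) /= inordK.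
  move=> /= /eqP <-.
  have hA : (#|A| < m.+1)%N by rewrite ltnS -[X in (_ <= X)%N](card_ord m) max_card.
  by rewrite inordK.
rewrite sumr_const.
have -> : #|[pred A : {set 'I_m} | #|A| == k]| = 'C(m, k).
  have := card_draws 'I_m k; rewrite card_ord => <-.
  by apply: eq_card => A; rewrite inE.
by rewrite -mulrnAr -mulr_natr -natrM mulnC.
Qed.

Lemma binfact_S m k : (k <= m)%N ->
  ('C(m.+1, k) * (m.+1 - k)`! = m.+1 * ('C(m, k) * (m - k)`!))%N.
Proof.
move=> km; apply/eqP; rewrite -(eqn_pmul2r (fact_gt0 k)).
rewrite -mulnA [((m.+1 - k)`! * _)%N]mulnC bin_fact; last exact: leqW.
by rewrite -!mulnA [((m - k)`! * _)%N]mulnC bin_fact // factS.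
Qed.

Lemma E_S m : E m.+1 = m.+1%:R * E m + (-1) ^+ m.+1.
Proof.
rewrite /E big_ord_recr /= binn subnn fact0 muln1 mulr1 mulr_sumr.
congr (_ + _); apply: eq_bigr => i _ /=.
rewrite binfact_S -1?ltnS // natrM; ring.
Qed.

Lemma E_SS m : E m.+2 = m.+1%:R * (E m.+1 + E m).
Proof.
have h1 := E_S m.+1; have h2 := E_S m.
rewrite h1 h2 !exprS.
rewrite -[(m.+2)%:R]natr1 -[(m.+1)%:R]natr1; ring.
Qed.

Lemma E0 : E 0 = 1. Proof. by rewrite /E big_ord_recr big_ord0 /= add0r mul1r. Qed.
Lemma E1 : E 1 = 0. Proof. by rewrite E_S E0 expr1 mulr1 addrN. Qed.

Lemma key n : (0 < n)%N ->
  n%:R * (A n)%:R = (n.+1)`!%:R - E n.+1 :> rat /\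
  n.+1%:R * (A n.+1)%:R = (n.+2)`!%:R - E n.+2 :> rat.
Proof.
elim: n => [//|n IH] _.
case: n IH => [_|n IH].
  have a2 : A 2 = 2%N by rewrite recA // A1 C1.
  rewrite A1 a2 !E_SS E1 E0 /=; split; rewrite /= ?factS ?fact0; ring.
have [h1 h2] := IH isT; split=> //.
have eA : A n.+3 = (n.+2 * A n.+2 + n.+1 * A n.+1)%N by rewrite recA // recC.
have e2 : E n.+3 = (n.+3)`!%:R - n.+2%:R * (A n.+2)%:R by rewrite h2; ring.
have e1 : E n.+2 = (n.+2)`!%:R - n.+1%:R * (A n.+1)%:R by rewrite h1; ring.
rewrite E_SS e2 e1 eA !factS !natrD !natrM.
rewrite -[(n.+3)%:R]natr1 -[(n.+2)%:R]natr1 -[(n.+1)%:R]natr1.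
ring.
Qed.

Theorem mainTheorem9 (n : nat) (hn : (1 <= n)%N) :
  (#|I000 n|%:R : rat) = (((n.+1)`!)%:R - (derangements n.+1)%:R) / n%:R.
Proof.
rewrite card_I000 der_E -/(A n); have [h _] := key hn.
rewrite -h mulrAC divff ?mul1r //.
by rewrite pnatr_eq0 -lt0n.
Qed.
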